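(* Let $\mathcal{C}$ be an idempotent Mal'cev clone on $\{0,1,2\}$ that contains a majority operation and preserves $\mu_2$. (1) If $\mathcal{C}$ does not preserve $\psi_2$, then $\mathcal{C}\equiv_{\mathrm{m}}\mathcal{C}_2$ or $\mathcal{C}\equiv_{\mathrm{m}}\mathcal{I}_2$. (2) If $\mathcal{C}$ preserves $\psi_2$ but not $\rho_2$, then $\mathcal{C}\equiv_{\mathrm{m}}\mathrm{Pol}(\mathbb{M}_1)$. (3) If $\mathcal{C}$ preserves both $\psi_2$ and $\rho_2$, then $\mathcal{C}\equiv_{\mathrm{m}}\mathrm{Pol}(\mathbb{M}_0)$. Furthermore, $\mathrm{Pol}(\mathbb{M}_0)\leq_{\mathrm{m}}\mathrm{Pol}(\mathbb{M}_1)\leq_{\mathrm{m}}\mathcal{C}_2\leq_{\mathrm{m}}\mathcal{I}_2$, and these four clones are pairwise not minor-equivalent.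
   Context: A clone is idempotent if $f(x,\dots,x)\approx x$ for all its operations; it is Mal'cev if it contains $d$ with $d(y,x,x)\approx d(x,x,y)\approx y$; a majority operation $m$ satisfies $m(x,y,y)\approx m(y,x,y)\approx m(y,y,x)\approx y$. $\mathrm{Pol}(\Gamma)$ is the clone of operations preserving all relations in $\Gamma$. For an $n$-ary $f$ and $\sigma\colon[n]\to[r]$, $f_\sigma(x_1,\dots,x_r)=f(x_{\sigma(1)},\dots,x_{\sigma(n)})$; a minion homomorphism is an arity-preserving map $\xi$ between clones with $\xi(f_\sigma)=\xi(f)_\sigma$. $\mathcal{C}\leq_{\mathrm{m}}\mathcal{D}$ means there is a minion homomorphism $\mathcal{C}\to\mathcal{D}$, and $\equiv_{\mathrm{m}}$ means $\leq_{\mathrm{m}}$ in both directions. Relations: $\mu_2$ is the equivalence relation on $\{0,1,2\}$ with classes $\{0,1\},\{2\}$; $\rho_2=\{0,1,2\}^2\setminus\mu_2$; $\psi_2=\{(0,1),(1,0),(2,2)\}$. Structures/clones: $\mathbb{M}_1=(\{0,1,2\};\psi_2,\mu_2,\{0\},\{1\},\{2\})$; $\mathbb{M}_0=(\{0,1,2\};\psi_2,\rho_2,\{0,1\},\{0\},\{1\},\{2\})$; $\mathcal{C}_2=\mathrm{Pol}(\{0,1\};\neq,\{0\},\{1\})$; $\mathcal{I}_2=\mathrm{Pol}(\{0,1\};\{0\},\{1\})$. *)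

(* Defs.v *)
From Stdlib Require Import List.
From mathcomp Require Import all_boot.
Set Implicit Arguments. Unset Strict Implicit. Unset Printing Implicit Defensive.

(* n-ary operations on a finite domain T, as finite functions on n-tuples
   (so that Leibniz equality is extensional equality). *)
Definition op (T : finType) (n : nat) := {ffun {ffun 'I_n -> T} -> T}.

Definition opset (T : finType) := forall n : nat, op T n -> Prop.

Definition proj (T : finType) (n : nat) (i : 'I_n) : op T n := [ffun x : {ffun 'I_n -> T} => x i].

Definition comp (T : finType) (n m : nat) (f : op T n) (g : 'I_n -> op T m) : op T m :=
  [ffun x : {ffun 'I_m -> T} => f [ffun i => g i x]].

Definition is_clone (T : finType) (C : opset T) : Prop :=
  (forall n (i : 'I_n), C n (proj T i)) /\
  (forall n m (f : op T n) (g : 'I_n -> op T m),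
      C n f -> (forall i, C m (g i)) -> C m (comp f g)).

Definition minor (T : finType) (n r : nat) (sigma : 'I_n -> 'I_r) (f : op T n) : op T r :=
  [ffun x : {ffun 'I_r -> T} => f [ffun i => x (sigma i)]].

Definition tup3 (T : finType) (a b c : T) : {ffun 'I_3 -> T} :=
  [ffun i : 'I_3 => nth a [:: a; b; c] i].

Definition idempotent_clone (T : finType) (C : opset T) : Prop :=
  forall n (f : op T n), C n f -> forall x : T, f [ffun _ => x] = x.

Definition malcev (T : finType) (C : opset T) : Prop :=
  exists d : op T 3, C 3 d /\
    forall x y : T, d (tup3 y x x) = y /\ d (tup3 x x y) = y.

Definition is_majority (T : finType) (m : op T 3) : Prop :=
  forall x y : T, m (tup3 x y y) = y /\ m (tup3 y x y) = y /\ m (tup3 y y x) = y.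

Definition has_majority (T : finType) (C : opset T) : Prop :=
  exists m : op T 3, C 3 m /\ is_majority m.

Record relation (T : finType) := Rel { rar : nat; rmem : pred {ffun 'I_rar -> T} }.

Definition rel1 (T : finType) (A : pred T) : relation T :=
  @Rel T 1 (fun t => A (t ord0)).
Definition rel2 (T : finType) (r : T -> T -> bool) : relation T :=
  @Rel T 2 (fun t => r (t ord0) (t (@Ordinal 2 1 isT))).

Definition preserves (T : finType) (n : nat) (f : op T n) (R : relation T) : Prop :=
  forall M : 'I_n -> {ffun 'I_(rar R) -> T},
    (forall i, @rmem T R (M i)) -> @rmem T R [ffun j : 'I_(rar R) => f [ffun i : 'I_n => M i j]].

Definition clone_preserves (T : finType) (C : opset T) (R : relation T) : Prop :=
  forall n (f : op T n), C n f -> preserves f R.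

Definition Pol (T : finType) (Gamma : list (relation T)) : opset T :=
  fun n f => forall R, In R Gamma -> preserves f R.

Definition minion_hom (A B : finType) (C : opset A) (D : opset B)
    (xi : forall n, op A n -> op B n) : Prop :=
  (forall n (f : op A n), C n f -> D n (xi n f)) /\
  (forall n r (sigma : 'I_n -> 'I_r) (f : op A n),
      C n f -> xi r (minor sigma f) = minor sigma (xi n f)).

Definition minor_le (A B : finType) (C : opset A) (D : opset B) : Prop :=
  exists xi, minion_hom C D xi.

Definition minor_eq (A B : finType) (C : opset A) (D : opset B) : Prop :=
  minor_le C D /\ minor_le D C.

Definition mu2 : relation 'I_3 :=
  rel2 (fun x y : 'I_3 => (val x == 2) == (val y == 2)).
Definition rho2 : relation 'I_3 :=
  rel2 (fun x y : 'I_3 => (val x == 2) != (val y == 2)).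
Definition psi2 : relation 'I_3 :=
  rel2 (fun x y : 'I_3 =>
    [|| (val x == 0) && (val y == 1), (val x == 1) && (val y == 0)
      | (val x == 2) && (val y == 2)]).
Definition const3 (k : nat) : relation 'I_3 := rel1 (fun x : 'I_3 => val x == k).

Definition M1 : list (relation 'I_3) :=
  [:: psi2; mu2; const3 0; const3 1; const3 2].
Definition M0 : list (relation 'I_3) :=
  [:: psi2; rho2; rel1 (fun x : 'I_3 => val x != 2); const3 0; const3 1; const3 2].

Definition const2 (k : nat) : relation 'I_2 := rel1 (fun x : 'I_2 => val x == k).
Definition C2 : opset 'I_2 :=
  Pol [:: rel2 (fun x y : 'I_2 => x != y); const2 0; const2 1].
Definition I2 : opset 'I_2 := Pol [:: const2 0; const2 1].

(* Main.v *)
Require Import Defs.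
From Stdlib Require Import List ClassicalDescription IndefiniteDescription Classical_Prop.
From mathcomp Require Import all_boot.
Set Implicit Arguments. Unset Strict Implicit. Unset Printing Implicit Defensive.

Definition rb (N : nat) (L : seq bool) (a b : nat) : bool := nth false L (a * N + b).
Definition mkrel (N : nat) (F : nat -> nat -> bool) : seq bool :=
  mkseq (fun i => F (i %/ N) (i %% N)) (N * N).

Lemma idx_lt N a b : a < N -> b < N -> a * N + b < N * N.
Proof.
move=> ha hb; apply: (@leq_trans (a * N + N)); first by rewrite ltn_add2l.
by rewrite addnC -mulSn leq_mul2r ha orbT.
Qed.

Lemma rb_mkrel N F a b : a < N -> b < N -> rb N (mkrel N F) a b = F a b.
Proof.
move=> ha hb; rewrite /rb /mkrel nth_mkseq ?idx_lt //.
have N0 : 0 < N by apply: leq_ltn_trans hb.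
by rewrite divnMDl // divn_small // addn0 modnMDl modn_small.
Qed.

Lemma size_mkrel N F : size (mkrel N F) = N * N.
Proof. by rewrite size_mkseq. Qed.

Definition FULLr N := mkrel N (fun _ _ => true).
Definition EQr N := mkrel N (fun a b => a == b).
Definition band N A B := mkrel N (fun a b => rb N A a b && rb N B a b).
Definition bconv N A := mkrel N (fun a b => rb N A b a).
Definition bcomp N A B := mkrel N (fun a c => has (fun b => rb N A a b && rb N B b c) (iota 0 N)).
Definition diagr N (P : nat -> bool) := mkrel N (fun a b => (a == b) && P a).

Section Ops.
Variable m : nat.
Local Notation N := m.+1.
Local Notation T := 'I_N.

Definition P2 n (f : op T n) (L : seq bool) :=
  forall x y : {ffun 'I_n -> T}, (forall i, rb N L (x i) (y i)) -> rb N L (f x) (f y).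

Definition mkM n (x y : {ffun 'I_n -> T}) : 'I_n -> {ffun 'I_2 -> T} :=
  fun i => [ffun j : 'I_2 => if j == ord0 then x i else y i].

Lemma pres_P2 n (f : op T n) (r : T -> T -> bool) :
  preserves f (rel2 r) <-> (forall x y : {ffun 'I_n -> T}, (forall i, r (x i) (y i)) -> r (f x) (f y)).
Proof.
split.
- move=> H x y Hxy.
  have Hrows : forall i, @rmem _ (rel2 r) (mkM x y i).
    by move=> i; rewrite /= /mkM !ffunE /=; exact: Hxy.
  have HH := H (mkM x y) Hrows.
  have E0 : [ffun j => f [ffun i => mkM x y i j]] = [ffun j : 'I_2 => if j == ord0 then f x else f y].
    apply/ffunP=> j; rewrite !ffunE; case: ifP => hj; congr (f _); apply/ffunP=> i;
    by rewrite !ffunE /mkM ?ffunE hj.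
  by move: HH; rewrite E0 /= !ffunE.
- move=> H M HM /=; rewrite !ffunE; apply: H=> i; rewrite !ffunE; exact: HM.
Qed.

Lemma P2_pres n (f : op T n) L : P2 f L <-> preserves f (rel2 (fun a b : T => rb N L a b)).
Proof. by rewrite pres_P2. Qed.

Lemma pres_ext n (f : op T n) (r s : T -> T -> bool) :
  (forall a b, r a b = s a b) -> preserves f (rel2 r) -> preserves f (rel2 s).
Proof. move=> E; rewrite !pres_P2 => H x y Hxy; rewrite -E; apply: H => i; rewrite E; exact: Hxy. Qed.

Lemma P2_of_pres n (f : op T n) (r : T -> T -> bool) L :
  (forall a b : T, rb N L a b = r a b) -> preserves f (rel2 r) -> P2 f L.
Proof. move=> E H; apply/P2_pres; apply: pres_ext H => a b; by rewrite E. Qed.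

Lemma pres_of_P2 n (f : op T n) (r : T -> T -> bool) L :
  (forall a b : T, rb N L a b = r a b) -> P2 f L -> preserves f (rel2 r).
Proof. move=> E /P2_pres H; apply: pres_ext H => a b; by rewrite E. Qed.

Lemma pres1 n (f : op T n) (A : pred T) :
  preserves f (rel1 A) <-> (forall x : {ffun 'I_n -> T}, (forall i, A (x i)) -> A (f x)).
Proof.
split.
- move=> H x Hx.
  have Hrows : forall i, @rmem _ (rel1 A) [ffun _ : 'I_1 => x i] by move=> i; rewrite /= ffunE; exact: Hx.
  have HH := H (fun i => [ffun _ : 'I_1 => x i]) Hrows.
  have E0 : [ffun j => f [ffun i => [ffun _ : 'I_1 => x i] j]] = [ffun _ : 'I_1 => f x].
    by apply/ffunP=> j; rewrite !ffunE; congr (f _); apply/ffunP=> i; rewrite !ffunE.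
  by move: HH; rewrite E0 /= !ffunE.
- move=> H M HM /=; rewrite ffunE; apply: H=> i; rewrite ffunE; exact: HM.
Qed.

Lemma P2_diag n (f : op T n) (P : nat -> bool) :
  preserves f (rel1 (fun a : T => P a)) -> P2 f (diagr N P).
Proof.
move/pres1=> H x y Hxy.
have Hxy' : forall i, (x i == y i :> nat) && P (x i).
  by move=> i; have := Hxy i; rewrite /diagr rb_mkrel.
have exy : x = y by apply/ffunP=> i; have /andP[/eqP /val_inj] := Hxy' i.
subst y; rewrite /diagr rb_mkrel // eqxx /=; apply: H => i; by have /andP[] := Hxy' i.
Qed.

Lemma P2_full n (f : op T n) : P2 f (FULLr N).
Proof. by move=> x y _; rewrite /FULLr rb_mkrel. Qed.

Lemma P2_eq n (f : op T n) : P2 f (EQr N).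
Proof.
move=> x y H; have -> : x = y.
  by apply/ffunP=> i; have := H i; rewrite /EQr rb_mkrel // => /eqP /val_inj.
by rewrite /EQr rb_mkrel.
Qed.

Lemma P2_band n (f : op T n) A B : P2 f A -> P2 f B -> P2 f (band N A B).
Proof.
move=> HA HB x y H; rewrite /band rb_mkrel //.
have H' : forall i, rb N A (x i) (y i) && rb N B (x i) (y i) by move=> i; have := H i; rewrite /band rb_mkrel.
by rewrite HA ?HB // => i; have /andP[] := H' i.
Qed.

Lemma P2_bconv n (f : op T n) A : P2 f A -> P2 f (bconv N A).
Proof.
move=> HA x y H; rewrite /bconv rb_mkrel //; apply: HA => i.
by have := H i; rewrite /bconv rb_mkrel.
Qed.

Lemma P2_bcomp n (f : op T n) A B : P2 f A -> P2 f B -> P2 f (bcomp N A B).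
Proof.
move=> HA HB x y H.
have H' : forall i, exists b : T, rb N A (x i) b && rb N B b (y i).
  move=> i; have := H i; rewrite /bcomp rb_mkrel // => /hasP[b].
  rewrite mem_iota add0n => /andP[_ hb] hab; exists (Ordinal hb); exact: hab.
pose z := [ffun i => odflt (x i) [pick b : T | rb N A (x i) b && rb N B b (y i)]].
have Hz : forall i, rb N A (x i) (z i) && rb N B (z i) (y i).
  move=> i; rewrite /z ffunE; case: pickP => [b //|]; have [b hb] := H' i.
  by move=> /(_ b); rewrite hb.
rewrite /bcomp rb_mkrel //; apply/hasP; exists (nat_of_ord (f z)); first by rewrite mem_iota add0n ltn_ord.
by rewrite HA ?HB // => i; have /andP[] := Hz i.
Qed.

Definition step := (nat * nat * nat)%type.
Definition app_step (L : seq (seq bool)) (s : step) : seq bool :=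
  let: (t, i, j) := s in
  let A := nth (FULLr N) L i in let B := nth (FULLr N) L j in
  if t == 0 then bconv N A else if t == 1 then band N A B else bcomp N A B.
Fixpoint run (L : seq (seq bool)) (ss : seq step) : seq (seq bool) :=
  match ss with [::] => L | s :: ss' => run (rcons L (app_step L s)) ss' end.

Lemma run_pres n (f : op T n) L ss :
  (forall R, R \in L -> P2 f R) -> forall R, R \in run L ss -> P2 f R.
Proof.
elim: ss L => [|[[t i] j] ss IH] L HL //=.
apply: IH => R; rewrite mem_rcons inE => /orP[/eqP ->|]; last exact: HL.
have Hn : forall k, P2 f (nth (FULLr N) L k).
  move=> k; case: (ltnP k (size L)) => hk; first by apply: HL; rewrite mem_nth.
  by rewrite nth_default //; exact: P2_full.
rewrite /app_step; case: ifP => _; first exact: P2_bconv.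
by case: ifP => _; [apply: P2_band | apply: P2_bcomp].
Qed.

Definition CP (C : opset T) (L : seq bool) := forall n (f : op T n), C n f -> P2 f L.

Lemma run_CP (C : opset T) L ss :
  (forall R, R \in L -> CP C R) -> forall R, R \in run L ss -> CP C R.
Proof. move=> H R HR n f Cf; apply: (run_pres (L:=L) (ss:=ss)) HR => R' /H; exact. Qed.

End Ops.

Definition pb (P : Prop) : bool := if excluded_middle_informative P then true else false.
Lemma pbE (P : Prop) : pb P = true <-> P.
Proof. by rewrite /pb; case: excluded_middle_informative. Qed.

Lemma tup3E (T : finType) (a b c : T) (i : 'I_3) :
  tup3 a b c i = if val i == 0 then a else if val i == 1 then b else c.
Proof. by rewrite /tup3 ffunE; case: i => [[|[|[|]]] ?]. Qed.

Lemma maj_two (T : finType) (mj : op T 3) (u v w y : T) : is_majority mj ->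
  [|| (u == y) && (v == y), (u == y) && (w == y) | (v == y) && (w == y)] ->
  mj (tup3 u v w) = y.
Proof.
move=> M /or3P[] /andP[/eqP-> /eqP->].
- by case: (M w y) => _ [_ ->].
- by case: (M v y) => _ [-> _].
- by case: (M u y) => [-> _].
Qed.

Section BP.
Variable m : nat.
Local Notation N := m.+1.
Local Notation T := 'I_N.

Lemma interp2 (C : opset T) (Ccl : is_clone C) n (f : op T n) : (forall L, size L = N * N -> CP C L -> P2 f L) ->
  forall a b, exists g, C n g /\ g a = f a /\ g b = f b.
Proof.
move=> H a b.
pose L := mkrel N (fun u v => pb (exists g, C n g /\ (g a : nat) = u /\ (g b : nat) = v)).
have CL : CP C L.
  move=> k h Ch X Y HXY.
  have G : forall i, {g | C n g /\ (g a : nat) = X i /\ (g b : nat) = Y i}.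
    move=> i; apply: constructive_indefinite_description; apply/pbE.
    by have := HXY i; rewrite /L rb_mkrel.
  pose g := Defs.comp h (fun i => sval (G i)).
  have Cg : C n g by apply: Ccl.2 => // i; case: (G i) => g' [].
  rewrite /L rb_mkrel //; apply/pbE; exists g; split=> //.
  rewrite /g /Defs.comp !ffunE; split; congr (nat_of_ord (h _)); apply/ffunP=> i; rewrite ffunE;
    case: (G i) => g' [_ [ha hb]] /=; apply: val_inj; rewrite /= ?ha ?hb //.
have := H L (size_mkrel _ _) CL a b.
have Hab : forall i, rb N L (a i) (b i).
  move=> i; rewrite /L rb_mkrel //; apply/pbE; exists (proj T i); split; first exact: Ccl.1.
  by rewrite /proj !ffunE.
move=> /(_ Hab); rewrite /L rb_mkrel // => /pbE [g [Cg [ha hb]]].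
by exists g; split=> //; split; apply: val_inj.
Qed.

Lemma interp (C : opset T) (Ccl : is_clone C) (Cmaj : has_majority C) n (f : op T n) : 0 < n -> (forall L, size L = N * N -> CP C L -> P2 f L) ->
  forall s : seq {ffun 'I_n -> T}, exists g, C n g /\ {in s, forall x, g x = f x}.
Proof.
move=> n0 H; have I2 := interp2 Ccl H.
have P0 : exists g, C n g by exists (proj T (Ordinal n0)); exact: Ccl.1.
suff K : forall k s, size s <= k -> exists g, C n g /\ {in s, forall x, g x = f x}.
  by move=> s; apply: (K (size s)).
elim=> [|k IH] [|a [|b [|c t]]] //= hs.
- by case: P0 => g Cg; exists g.
- by case: P0 => g Cg; exists g.
- by have [g [Cg [ha _]]] := I2 a a; exists g; split=> // x; rewrite inE => /eqP->.
- by have [g [Cg [ha hb]]] := I2 a b; exists g; split=> // x; rewrite !inE => /orP[/eqP->|/eqP->].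
have [g1 [C1 H1]] := IH (b :: c :: t) hs.
have [g2 [C2 H2]] := IH (a :: c :: t) hs.
have [g3 [C3 H3]] := IH (a :: b :: t) hs.
case: Cmaj => mj [Cm Mm].
pose G (i : 'I_3) := if val i == 0 then g1 else if val i == 1 then g2 else g3.
exists (Defs.comp mj G); split; first by apply: (Ccl.2 _ _ _ _ Cm) => i; rewrite /G; case: (val i == 0); case: (val i == 1).
move=> x Hx; rewrite /Defs.comp ffunE.
have -> : [ffun i => G i x] = tup3 (g1 x) (g2 x) (g3 x).
  by apply/ffunP=> i; rewrite tup3E ffunE /G; case: (val i == 0); case: (val i == 1).
apply: maj_two => //.
have K1 : x \in b :: c :: t -> g1 x == f x by move/H1->.
have K2 : x \in a :: c :: t -> g2 x == f x by move/H2->.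
have K3 : x \in a :: b :: t -> g3 x == f x by move/H3->.
move: Hx; rewrite !inE => /or4P[] /[dup] Hx.
- move/eqP=> ex; subst x; rewrite K2 ?K3 ?inE ?eqxx ?orbT //.
- move/eqP=> ex; subst x; rewrite K1 ?K3 ?inE ?eqxx ?orbT //.
- move/eqP=> ex; subst x; rewrite K1 ?K2 ?inE ?eqxx ?orbT //.
- by move=> _; rewrite K1 ?K2 ?inE ?Hx ?orbT.
Qed.

Lemma BP (C : opset T) (Ccl : is_clone C) (Cmaj : has_majority C) n (f : op T n) : 0 < n ->
  (forall L, size L = N * N -> CP C L -> P2 f L) -> C n f.
Proof.
move=> n0 H; have [g [Cg Hg]] := interp Ccl Cmaj n0 H (enum {ffun 'I_n -> T}).
suff -> : f = g by [].
by apply/ffunP=> x; rewrite Hg // mem_enum.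
Qed.

End BP.

Definition rectb (N : nat) (L : seq bool) : bool :=
  all (fun a => all (fun b => all (fun c => all (fun d =>
    rb N L a b && rb N L c b && rb N L c d ==> rb N L a d) (iota 0 N)) (iota 0 N)) (iota 0 N)) (iota 0 N).

Lemma malcev_rect (C : opset 'I_3) L : malcev C -> CP C L -> rectb 3 L.
Proof.
case=> d [Cd Md] HL.
apply/allP=> a; rewrite mem_iota => /andP[_ ha]; apply/allP=> b; rewrite mem_iota => /andP[_ hb].
apply/allP=> c; rewrite mem_iota => /andP[_ hc]; apply/allP=> e; rewrite mem_iota => /andP[_ he].
apply/implyP=> /andP[/andP[h1 h2] h3].
pose A := Ordinal ha; pose B := Ordinal hb; pose Cc := Ordinal hc; pose E := Ordinal he.
have := HL _ d Cd (tup3 A Cc Cc) (tup3 B B E).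
have [-> _] := Md Cc A; have [_ ->] := Md B E.
apply=> i; rewrite !tup3E; case: i => [[|[|[|]]] ?] //=.
Qed.

Fixpoint tuples (N k : nat) : seq (seq nat) :=
  if k is k'.+1 then [seq a :: w | a <- iota 0 N, w <- tuples N k'] else [:: [::]].

Lemma mem_tuples N w : all (fun a => a < N) w -> w \in tuples N (size w).
Proof.
elim: w => [|a w IH] //= /andP[ha hw].
by apply/allpairsP; exists (a, w); rewrite /= mem_iota ha IH.
Qed.

Fixpoint blists (k : nat) : seq (seq bool) :=
  if k is k'.+1 then [seq b :: l | b <- [:: false; true], l <- blists k'] else [:: [::]].

Lemma mem_blists l : l \in blists (size l).
Proof.
elim: l => [|b l IH] //=.
by rewrite !mem_cat; case: b; rewrite map_f ?orbT.
Qed.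

Definition ofcode (N c : nat) : seq bool := mkseq (fun i => odd (c %/ 2 ^ i)) (N * N).

Section PP.
Variables (ms k : nat) (H : nat -> seq nat) (Gt : seq nat).
Local Notation NS := ms.+1.

Definition code (W : seq nat) : nat := foldr (fun d acc => d + NS * acc) 0 W.
Definition G (W : seq nat) : nat := nth 0 Gt (code W).

Definition xi n (f : op 'I_NS n) : op 'I_3 n :=
  [ffun x : {ffun 'I_n -> 'I_3} =>
     inord (G [seq (f [ffun i => inord (nth 0 (H (x i)) j)] : nat) | j <- iota 0 k])].

Lemma xi_minor n r (s : 'I_n -> 'I_r) (f : op 'I_NS n) : xi (minor s f) = minor s (xi f).
Proof.
apply/ffunP=> x; rewrite /xi /minor !ffunE; congr (inord (G _)); apply: eq_map => j.
by rewrite ffunE; congr (nat_of_ord (f _)); apply/ffunP=> i; rewrite !ffunE.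
Qed.

Definition hh (a b p : nat) : nat := if p < k then nth 0 (H a) p else nth 0 (H b) (p - k).
Definition condB (R B : seq bool) (p q : nat) : bool :=
  all (fun a => all (fun b => rb 3 R a b ==> rb NS B (hh a b p) (hh a b q)) (iota 0 3)) (iota 0 3).
Definition consB (Bs : seq (seq bool)) (R : seq bool) (p q : nat) : seq bool :=
  foldr (fun B acc => if condB R B p q then band NS B acc else acc) (FULLr NS) Bs.
Definition tabB Bs R := [seq [seq consB Bs R p q | q <- iota 0 (k + k)] | p <- iota 0 (k + k)].
Definition okW (Tb : seq (seq (seq bool))) (W : seq nat) : bool :=
  all (fun p => all (fun q => rb NS (nth [::] (nth [::] Tb p) q) (nth 0 W p) (nth 0 W q))
     (iota 0 (k + k))) (iota 0 (k + k)).
Definition checkR Bs R : bool :=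
  let Tb := tabB Bs R in
  all (fun W => okW Tb W ==> rb 3 R (G (take k W)) (G (drop k W))) (tuples NS (k + k)).
Definition Hok : bool := all (fun a => all (fun v => v < NS) (H a)) (iota 0 3).
Definition Gok : bool := all (fun v => v < 3) Gt.

Lemma G_lt W : Gok -> G W < 3.
Proof.
move=> /allP hG; rewrite /G; case: (ltnP (code W) (size Gt)) => h.
  by apply: hG; rewrite mem_nth.
by rewrite nth_default.
Qed.

Lemma H_lt a j : Hok -> a < 3 -> nth 0 (H a) j < NS.
Proof.
move=> /allP hH ha; case: (ltnP j (size (H a))) => h; last by rewrite nth_default.
by apply: (allP (hH a _)); rewrite ?mem_iota ?mem_nth.
Qed.

Lemma hh_lt a b p : Hok -> a < 3 -> b < 3 -> hh a b p < NS.
Proof. by move=> hH ha hb; rewrite /hh; case: ifP => _; apply: H_lt. Qed.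

Lemma xi_sound n (f : op 'I_NS n) Bs R : Hok -> Gok ->
  (forall B, B \in Bs -> P2 f B) -> checkR Bs R -> P2 (xi f) R.
Proof.
move=> hH hG HB hC x y Hxy.
pose col p := [ffun i => (inord (hh (x i) (y i) p) : 'I_NS)].
pose W := [seq (f (col p) : nat) | p <- iota 0 (k + k)].
have hW : W \in tuples NS (k + k).
  have -> : k + k = size W by rewrite size_map size_iota.
  by apply: mem_tuples; apply/allP=> v /mapP[p _ ->].
have oW : okW (tabB Bs R) W.
  apply/allP=> p; rewrite mem_iota add0n => /andP[_ hp]; apply/allP=> q; rewrite mem_iota add0n => /andP[_ hq].
  rewrite /tabB (nth_map 0) ?size_iota // nth_iota // add0n (nth_map 0) ?size_iota // nth_iota // add0n.
  rewrite /W (nth_map 0) ?size_iota // nth_iota // add0n (nth_map 0) ?size_iota // nth_iota // add0n.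
  elim: Bs HB {hC} => [|B Bs IH] HB /=; first by rewrite /FULLr rb_mkrel.
  have IH' := IH (fun B' hB' => HB B' (@mem_behead _ (B :: Bs) _ hB')).
  case: ifP => hc //; rewrite /band rb_mkrel // IH' andbT.
  apply: (HB B); first by rewrite inE eqxx.
  move=> i; rewrite !ffunE !inordK ?hh_lt //.
  have := allP hc (x i); rewrite mem_iota ltn_ord => /(_ isT) /allP /(_ (y i)).
  by rewrite mem_iota ltn_ord => /(_ isT) /implyP; apply.
have := allP hC W hW; rewrite oW /= => HR.
have ek : iota 0 (k + k) = iota 0 k ++ [seq k + j | j <- iota 0 k].
  by rewrite iotaD add0n -{2}(addn0 k) iotaDl.
have eW1 : take k W = [seq (f [ffun i => inord (nth 0 (H (x i)) j)] : nat) | j <- iota 0 k].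
  rewrite /W ek map_cat take_size_cat ?size_map ?size_iota //.
  apply/eq_in_map => j; rewrite mem_iota add0n => /andP[_ hj].
  by congr (nat_of_ord (f _)); apply/ffunP=> i; rewrite !ffunE /hh hj.
have eW2 : drop k W = [seq (f [ffun i => inord (nth 0 (H (y i)) j)] : nat) | j <- iota 0 k].
  rewrite /W ek map_cat drop_size_cat ?size_map ?size_iota // -map_comp.
  apply: eq_map => j /=.
  by congr (nat_of_ord (f _)); apply/ffunP=> i; rewrite !ffunE /hh ltnNge leq_addr /= addKn.
by rewrite /xi !ffunE !inordK ?G_lt // -eW1 -eW2.
Qed.
End PP.

Definition mu2L := mkrel 3 (fun a b => (a == 2) == (b == 2)).
Definition rho2L := mkrel 3 (fun a b => (a == 2) != (b == 2)).
Definition psi2L := mkrel 3 (fun a b => [|| (a == 0) && (b == 1), (a == 1) && (b == 0) | (a == 2) && (b == 2)]).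
Definition ne01L := mkrel 3 (fun a b => ((a == 0) && (b == 1)) || ((a == 1) && (b == 0))).
Definition dL (N k : nat) := diagr N (fun a => a == k).
Definition d01L := diagr 3 (fun a => a != 2).
Definition ne2L := mkrel 2 (fun a b => a != b).
Definition gC1 := [:: EQr 3; FULLr 3; dL 3 0; dL 3 1; dL 3 2; mu2L].
Definition gCpsi := rcons gC1 psi2L.
Definition gM0 := [:: EQr 3; FULLr 3; dL 3 0; dL 3 1; dL 3 2; psi2L; rho2L; d01L].
Definition gM1 := [:: EQr 3; FULLr 3; dL 3 0; dL 3 1; dL 3 2; psi2L; mu2L].
Definition gC2 := [:: EQr 2; FULLr 2; dL 2 0; dL 2 1; ne2L].
Definition gI2 := [:: EQr 2; FULLr 2; dL 2 0; dL 2 1].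
Definition badL := [:: psi2L; ne01L; rho2L].

Fixpoint lookup (R : seq bool) (t : seq (nat * seq step)) : seq step :=
  if t is (c, s) :: t' then (if ofcode 3 c == R then s else lookup R t') else [::].
Fixpoint lookup2 (R1 R2 : seq bool) (t : seq (nat * nat * seq step)) : seq step :=
  if t is (c1, c2, s) :: t' then (if (ofcode 3 c1 == R1) && (ofcode 3 c2 == R2) then s else lookup2 R1 R2 t') else [::].
Definition S84c := [:: 0; 1; 2; 3; 4; 5; 6; 7; 8; 9; 10; 12; 16; 17; 18; 20; 24; 27; 28; 32; 33; 34; 35; 36; 40; 45; 48; 54; 56; 63; 64; 65; 66; 68; 72; 73; 80; 82; 96; 100; 128; 129; 130; 132; 136; 137; 144; 146; 160; 164; 192; 195; 196; 216; 219; 224; 228; 256; 257; 258; 259; 260; 264; 265; 266; 272; 273; 274; 280; 283; 288; 292; 320; 325; 360; 365; 384; 390; 432; 438; 448; 455; 504; 511].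
Definition S84L := map (ofcode 3) S84c.
Definition S63c := [:: 0; 1; 2; 3; 4; 5; 6; 7; 8; 9; 10; 16; 17; 18; 24; 27; 32; 36; 40; 45; 48; 54; 56; 63; 64; 65; 72; 73; 128; 130; 144; 146; 192; 195; 216; 219; 256; 257; 258; 259; 260; 264; 265; 266; 272; 273; 274; 280; 283; 288; 292; 320; 325; 360; 365; 384; 390; 432; 438; 448; 455; 504; 511].
Definition S63L := map (ofcode 3) S63c.
Definition S83c := [:: 0; 1; 2; 3; 4; 5; 6; 7; 8; 9; 10; 12; 16; 17; 18; 20; 24; 27; 28; 32; 33; 34; 35; 36; 40; 45; 48; 54; 56; 63; 64; 65; 66; 68; 72; 73; 80; 82; 96; 100; 128; 129; 130; 132; 136; 137; 144; 146; 160; 164; 192; 195; 196; 216; 219; 224; 228; 256; 257; 258; 259; 260; 264; 265; 272; 273; 274; 280; 283; 288; 292; 320; 325; 360; 365; 384; 390; 432; 438; 448; 455; 504; 511].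
Definition S83L := map (ofcode 3) S83c.
Definition Ec := [:: 0; 1; 2; 3; 4; 5; 6; 7; 8; 9; 12; 16; 17; 18; 20; 24; 27; 28; 32; 33; 34; 35; 36; 40; 45; 48; 54; 56; 63; 64; 65; 66; 72; 73; 80; 82; 128; 129; 130; 136; 137; 144; 146; 192; 195; 216; 219; 256; 257; 258; 259; 260; 264; 265; 272; 273; 274; 280; 283; 288; 292; 320; 325; 360; 365; 384; 390; 432; 438; 448; 455; 504; 511].
Definition EL := map (ofcode 3) Ec.
Definition X1c := [:: 0; 1; 2; 3; 4; 5; 6; 7; 8; 9; 16; 17; 18; 24; 27; 32; 33; 34; 35; 36; 40; 45; 48; 54; 56; 63; 64; 65; 72; 73; 128; 129; 130; 136; 137; 144; 146; 192; 195; 216; 219; 256; 257; 258; 259; 260; 264; 265; 272; 273; 274; 280; 283; 288; 292; 320; 325; 360; 365; 384; 390; 432; 438; 448; 455; 504; 511].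
Definition X1L := map (ofcode 3) X1c.
Definition X2c := [:: 0; 1; 2; 3; 4; 5; 6; 7; 8; 9; 12; 16; 17; 18; 20; 24; 27; 28; 32; 36; 40; 45; 48; 54; 56; 63; 64; 65; 66; 72; 73; 80; 82; 128; 130; 144; 146; 192; 195; 216; 219; 256; 257; 258; 259; 260; 264; 265; 272; 273; 274; 280; 283; 288; 292; 320; 325; 360; 365; 384; 390; 432; 438; 448; 455; 504; 511].
Definition X2L := map (ofcode 3) X2c.
Definition tab84 := [:: (14, [:: (2,6,5)]);
 (21, [:: (2,6,5)]);
 (42, [:: (2,6,5)]);
 (49, [:: (2,6,5)]);
 (70, [:: (2,6,5)]);
 (74, [:: (2,5,6)]);
 (76, [:: (2,5,6)]);
 (78, [:: (2,5,6)]);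
 (81, [:: (2,5,6)]);
 (84, [:: (2,6,5); (2,5,7)]);
 (97, [:: (2,5,6)]);
 (98, [:: (2,6,5); (2,5,7)]);
 (112, [:: (2,6,5)]);
 (113, [:: (2,5,6)]);
 (118, [:: (2,6,5)]);
 (133, [:: (2,6,5)]);
 (138, [:: (2,5,6)]);
 (140, [:: (2,6,5); (2,5,7)]);
 (145, [:: (2,5,6)]);
 (148, [:: (2,5,6)]);
 (149, [:: (2,5,6)]);
 (161, [:: (2,6,5); (2,5,7)]);
 (162, [:: (2,5,6)]);
 (168, [:: (2,6,5)]);
 (170, [:: (2,5,6)]);
 (173, [:: (2,6,5)]);
 (220, [:: (2,5,6)]);
 (227, [:: (2,5,6)]);
 (268, [:: (2,5,6)]);
 (276, [:: (2,5,6)]);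
 (284, [:: (2,5,6)]);
 (289, [:: (2,5,6)]);
 (290, [:: (2,5,6)]);
 (291, [:: (2,5,6)]);
 (322, [:: (2,6,5)]);
 (336, [:: (2,6,5)]);
 (338, [:: (2,6,5)]);
 (341, [:: (2,5,6)]);
 (362, [:: (2,5,6)]);
 (385, [:: (2,6,5)]);
 (392, [:: (2,6,5)]);
 (393, [:: (2,6,5)]);
 (398, [:: (2,5,6)]);
 (433, [:: (2,5,6)])].
Definition tab63 := [:: (12, [:: (0,7,7); (2,5,8); (2,7,5); (2,6,10); (2,9,11)]);
 (20, [:: (0,7,7); (2,5,8); (2,7,5); (2,6,10); (2,9,11)]);
 (28, [:: (0,7,7); (2,6,7); (2,8,9)]);
 (33, [:: (0,7,7); (2,5,8); (2,7,5); (2,6,10); (2,9,11)]);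
 (34, [:: (0,7,7); (2,5,8); (2,7,5); (2,6,10); (2,9,11)]);
 (35, [:: (0,7,7); (2,6,7); (2,8,9)]);
 (66, [:: (2,7,6); (2,5,8); (2,5,7); (0,10,10); (2,9,11)]);
 (68, [:: (2,7,5); (2,5,8)]);
 (80, [:: (2,7,6); (2,5,8); (2,5,7); (0,10,10); (2,9,11)]);
 (82, [:: (2,7,6); (0,7,7); (2,8,9)]);
 (96, [:: (2,7,5); (2,5,8)]);
 (100, [:: (2,7,5)]);
 (129, [:: (2,7,6); (2,5,8); (2,5,7); (0,10,10); (2,9,11)]);
 (132, [:: (2,7,5); (2,5,8)]);
 (136, [:: (2,7,6); (2,5,8); (2,5,7); (0,10,10); (2,9,11)]);
 (137, [:: (2,7,6); (0,7,7); (2,8,9)]);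
 (160, [:: (2,7,5); (2,5,8)]);
 (164, [:: (2,7,5)]);
 (196, [:: (2,5,7)]);
 (224, [:: (2,5,7)]);
 (228, [:: ])].
Definition tabE := [:: (10, [:: ]);
 (68, [:: (2,6,5); (2,5,7)]);
 (96, [:: (2,6,5); (2,5,7)]);
 (100, [:: (2,6,5)]);
 (132, [:: (2,6,5); (2,5,7)]);
 (160, [:: (2,6,5); (2,5,7)]);
 (164, [:: (2,6,5)]);
 (196, [:: (2,5,6)]);
 (224, [:: (2,5,6)]);
 (228, [:: ])].
Definition tabP := [:: (12, 33, [:: (0,7,7); (2,6,8)]);
 (12, 34, [:: (2,6,5); (0,7,7); (2,8,9)]);
 (12, 35, [:: (0,7,7); (2,6,8)]);
 (12, 129, [:: (2,6,7)]);
 (12, 136, [:: (2,5,7); (2,6,8)]);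
 (12, 137, [:: (2,6,7)]);
 (20, 33, [:: (2,6,5); (0,7,7); (2,8,9)]);
 (20, 34, [:: (0,7,7); (2,6,8)]);
 (20, 35, [:: (0,7,7); (2,6,8)]);
 (20, 129, [:: (2,5,7); (2,6,8)]);
 (20, 136, [:: (2,6,7)]);
 (20, 137, [:: (2,6,7)]);
 (28, 33, [:: (0,7,7); (2,6,8)]);
 (28, 34, [:: (0,7,7); (2,6,8)]);
 (28, 35, [:: (0,7,7); (2,6,8)]);
 (28, 129, [:: (2,6,7)]);
 (28, 136, [:: (2,6,7)]);
 (28, 137, [:: (2,6,7)]);
 (66, 33, [:: (2,7,6)]);
 (66, 34, [:: (2,5,6); (2,7,8)]);
 (66, 35, [:: (2,7,6)]);
 (66, 129, [:: (0,6,6); (2,8,7)]);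
 (66, 136, [:: (0,6,6); (2,5,7); (2,8,9)]);
 (66, 137, [:: (2,5,6); (0,7,7); (2,8,9)]);
 (80, 33, [:: (2,5,6); (2,7,8)]);
 (80, 34, [:: (2,7,6)]);
 (80, 35, [:: (2,7,6)]);
 (80, 129, [:: (0,6,6); (2,5,7); (2,8,9)]);
 (80, 136, [:: (0,6,6); (2,8,7)]);
 (80, 137, [:: (2,5,6); (0,7,7); (2,8,9)]);
 (82, 33, [:: (2,7,6)]);
 (82, 34, [:: (2,7,6)]);
 (82, 35, [:: (2,6,7)]);
 (82, 129, [:: (2,5,7); (0,6,6); (2,8,9)]);
 (82, 136, [:: (2,5,7); (0,6,6); (2,8,9)]);
 (82, 137, [:: (0,7,7); (2,6,8)])].
Definition BsM0 := run 2 gM0 [:: (2,1,2); (2,1,3); (2,1,4); (2,1,7); (2,2,1); (2,2,5); (2,2,6); (2,3,1); (2,3,5); (2,3,6); (2,4,1); (2,4,6); (2,5,7); (2,6,2); (2,6,3); (2,6,4); (2,6,6); (2,7,1); (2,2,11); (2,3,11); (2,6,19); (2,6,21); (2,6,22)].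
Definition BsM1 := run 2 gM1 [:: (2,1,2); (2,1,3); (2,1,4); (2,2,1); (2,2,5); (2,2,6); (2,3,1); (2,3,5); (2,3,6); (2,4,1); (2,6,2); (2,6,3); (2,1,12); (2,2,9); (2,3,9); (2,4,7); (2,4,8); (2,6,10); (2,6,12); (2,16,12); (2,17,9); (1,0,19); (1,5,19)].
Definition BsC2 := run 1 gC2 [:: (2,1,2); (2,1,3); (2,2,1); (2,2,4); (2,3,1); (2,3,4)].
Definition BsI2 := run 1 gI2 [:: (2,1,2); (2,1,3); (2,2,1); (2,3,1); (2,2,5); (2,3,4)].
Definition Ha (a : nat) : seq nat := nth [::] [:: [:: 0; 0; 0; 0]; [:: 1; 2; 2; 0]; [:: 2; 0; 2; 2]] a.
Definition Ga := [:: 0; 0; 2; 0; 0; 2; 0; 1; 2; 0; 0; 2; 0; 0; 2; 0; 1; 2; 0; 1; 2; 0; 1; 2; 1; 1; 2; 0; 0; 2; 0; 0; 2; 1; 0; 2; 0; 0; 2; 0; 0; 2; 1; 0; 2; 1; 0; 2; 1; 0; 2; 1; 1; 2; 0; 0; 2; 0; 0; 2; 0; 0; 2; 0; 0; 2; 0; 0; 2; 0; 0; 2; 0; 0; 2; 0; 0; 2; 1; 1; 2].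
Definition Hb (a : nat) : seq nat := nth [::] [:: [:: 0; 0]; [:: 1; 0]; [:: 2; 2]] a.
Definition Gb := [:: 0; 1; 2; 1; 0; 2; 0; 0; 2].
Definition Hc (a : nat) : seq nat := nth [::] [:: [:: 0; 0; 0]; [:: 0; 1; 1]; [:: 1; 0; 1]] a.
Definition Gc := [:: 0; 2; 0; 2; 0; 2; 1; 2].
Definition Hd1 (a : nat) : seq nat := nth [::] [:: [:: 0; 0]; [:: 0; 1]; [:: 1; 1]] a.
Definition Gd1 := [:: 0; 2; 1; 2].
Definition Hd2 (a : nat) : seq nat := nth [::] [:: [:: 0; 1]; [:: 0; 0]; [:: 1; 1]] a.
Definition Gd2 := [:: 1; 2; 0; 2].

Definition chk84 : bool :=
  let S := S84L in
  all (fun R => (R \in S) || ~~ rectb 3 R || has (fun X => ~~ rectb 3 X) (run 2 (rcons gC1 R) (lookup R tab84))) (blists 9).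
Lemma chk84_ok : chk84. Proof. vm_compute. reflexivity. Qed.

Definition chk63 : bool :=
  let S := S63L in
  all (fun R => (R \in S) || (rho2L \in run 2 (rcons gCpsi R) (lookup R tab63))) S84L.
Lemma chk63_ok : chk63. Proof. vm_compute. reflexivity. Qed.

Definition chk83 : bool := let S := S83L in all (fun R => (R == psi2L) || (R \in S)) S84L.
Lemma chk83_ok : chk83. Proof. vm_compute. reflexivity. Qed.

Definition chkE : bool :=
  let S := EL in
  all (fun R => (R == psi2L) || (R \in S) || has (fun X => X \in badL) (run 2 (rcons gC1 R) (lookup R tabE))) S84L.
Lemma chkE_ok : chkE. Proof. vm_compute. reflexivity. Qed.

Definition chkP : bool :=
  let S1 := X1L in let S2 := X2L in
  all (fun R1 => all (fun R2 => (R1 \in S1) || (R2 \in S2) ||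
     has (fun X => X \in badL) (run 2 (gC1 ++ [:: R1; R2]) (lookup2 R1 R2 tabP))) EL) EL.
Lemma chkP_ok : chkP. Proof. vm_compute. reflexivity. Qed.


Lemma chkA_H : Hok 2 Ha. Proof. vm_compute. reflexivity. Qed.
Lemma chkA_G : Gok Ga. Proof. vm_compute. reflexivity. Qed.
Lemma chkA_T : all (checkR 2 4 Ha Ga BsM0) S84L. Proof. vm_compute. reflexivity. Qed.

Lemma chkB_H : Hok 2 Hb. Proof. vm_compute. reflexivity. Qed.
Lemma chkB_G : Gok Gb. Proof. vm_compute. reflexivity. Qed.
Lemma chkB_T : all (checkR 2 2 Hb Gb BsM1) S63L. Proof. vm_compute. reflexivity. Qed.

Lemma chkC_H : Hok 1 Hc. Proof. vm_compute. reflexivity. Qed.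
Lemma chkC_G : Gok Gc. Proof. vm_compute. reflexivity. Qed.
Lemma chkC_T : all (checkR 1 3 Hc Gc BsC2) S83L. Proof. vm_compute. reflexivity. Qed.

Lemma chkD1_H : Hok 1 Hd1. Proof. vm_compute. reflexivity. Qed.
Lemma chkD1_G : Gok Gd1. Proof. vm_compute. reflexivity. Qed.
Lemma chkD1_T : all (checkR 1 2 Hd1 Gd1 BsI2) X1L. Proof. vm_compute. reflexivity. Qed.

Lemma chkD2_H : Hok 1 Hd2. Proof. vm_compute. reflexivity. Qed.
Lemma chkD2_G : Gok Gd2. Proof. vm_compute. reflexivity. Qed.
Lemma chkD2_T : all (checkR 1 2 Hd2 Gd2 BsI2) X2L. Proof. vm_compute. reflexivity. Qed.

Lemma rbE (m : nat) F (a b : 'I_m.+1) : rb m.+1 (mkrel m.+1 F) a b = F a b.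
Proof. by rewrite rb_mkrel. Qed.

Lemma cp_of m (C : opset 'I_m.+1) (r : 'I_m.+1 -> 'I_m.+1 -> bool) L :
  (forall a b : 'I_m.+1, rb m.+1 L a b = r a b) -> clone_preserves C (rel2 r) -> CP C L.
Proof. by move=> E H n f Cf; apply: P2_of_pres E (H n f Cf). Qed.

Lemma of_cp m (C : opset 'I_m.+1) (r : 'I_m.+1 -> 'I_m.+1 -> bool) L :
  (forall a b : 'I_m.+1, rb m.+1 L a b = r a b) -> CP C L -> clone_preserves C (rel2 r).
Proof. by move=> E H n f Cf; apply: pres_of_P2 E (H n f Cf). Qed.

Lemma nullary_idem m n (f : op 'I_m.+2 n) : (forall x, f [ffun _ => x] = x) -> 0 < n.
Proof.
case: n f => // f H; have e : [ffun _ : 'I_0 => (ord0 : 'I_m.+2)] = [ffun _ => ord_max].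
  by apply/ffunP=> [[]].
by have := H ord0; rewrite e H.
Qed.

Lemma idem_dL m (C : opset 'I_m.+2) k : idempotent_clone C -> CP C (dL m.+2 k).
Proof.
move=> Hid n f Cf; apply: P2_diag; apply/pres1 => x Hx.
have n0 := nullary_idem (Hid n f Cf).
have ex : x = [ffun _ => x (Ordinal n0)].
  apply/ffunP=> i; rewrite ffunE; apply: ord_inj.
  by move: (Hx i) (Hx (Ordinal n0)) => /eqP -> /eqP ->.
by rewrite ex (Hid n f Cf); exact: Hx.
Qed.

Lemma gC1_cp (C : opset 'I_3) : idempotent_clone C -> clone_preserves C mu2 ->
  forall R, R \in gC1 -> CP C R.
Proof.
move=> Hid Hmu R; rewrite !inE => /or4P[|||/or3P[]] /eqP->.
- by move=> n f _; exact: P2_eq.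
- by move=> n f _; exact: P2_full.
- exact: idem_dL.
- exact: idem_dL.
- exact: idem_dL.
- by apply: cp_of Hmu => a b; rewrite rbE.
Qed.

Lemma run_gens_cp (C : opset 'I_3) gs R ss : (forall X, X \in gs -> CP C X) -> CP C R ->
  forall X, X \in run 2 (rcons gs R) ss -> CP C X.
Proof.
move=> Hg HR; apply: run_CP => X; rewrite mem_rcons inE => /orP[/eqP->//|]; exact: Hg.
Qed.

Section Cls.
Variable C : opset 'I_3.
Hypotheses (Ccl : is_clone C) (Cid : idempotent_clone C) (Cmal : malcev C)
  (Cmaj : has_majority C) (Cmu : clone_preserves C mu2).

Lemma incl84 L : size L = 9 -> CP C L -> L \in S84L.
Proof.
move=> sL HL.
have := chk84_ok; rewrite /chk84 => /allP /(_ L); rewrite -sL mem_blists => /(_ isT).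
case/orP=> [/orP[//|]|].
- by rewrite (malcev_rect Cmal HL).
- case/hasP=> X HX; rewrite (malcev_rect Cmal (run_gens_cp (gC1_cp Cid Cmu) HL HX)) //.
Qed.

Lemma psi_cp : clone_preserves C psi2 -> CP C psi2L.
Proof. by apply: cp_of => a b; rewrite rbE. Qed.
Lemma cp_psi : CP C psi2L -> clone_preserves C psi2.
Proof. by apply: of_cp => a b; rewrite rbE. Qed.
Lemma rho_cp : clone_preserves C rho2 -> CP C rho2L.
Proof. by apply: cp_of => a b; rewrite rbE. Qed.
Lemma cp_rho : CP C rho2L -> clone_preserves C rho2.
Proof. by apply: of_cp => a b; rewrite rbE. Qed.

Lemma incl63 L : clone_preserves C psi2 -> ~ clone_preserves C rho2 ->
  size L = 9 -> CP C L -> L \in S63L.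
Proof.
move=> Hpsi Hrho sL HL; have H84 := incl84 sL HL.
have := chk63_ok; rewrite /chk63 => /allP /(_ L H84) /orP[//|] HX.
case: Hrho; apply: cp_rho.
have Hg : forall X, X \in gCpsi -> CP C X.
  move=> X; rewrite mem_rcons inE => /orP[/eqP->|]; first exact: psi_cp.
  exact: gC1_cp.
exact: (run_gens_cp Hg HL HX).
Qed.

Lemma incl83 L : ~ clone_preserves C psi2 -> size L = 9 -> CP C L -> L \in S83L.
Proof.
move=> Hpsi sL HL; have H84 := incl84 sL HL.
have := chk83_ok; rewrite /chk83 => /allP /(_ L H84) /orP[/eqP eL|//].
by case: Hpsi; apply: cp_psi; rewrite -eL.
Qed.

Lemma bad_cp X : X \in badL -> CP C X ->
  [\/ clone_preserves C psi2, CP C ne01L | clone_preserves C rho2].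
Proof.
rewrite !inE => /or3P[] /eqP-> H; [apply: Or31; exact: cp_psi | exact: Or32 | apply: Or33; exact: cp_rho].
Qed.

Lemma inclE L : ~ clone_preserves C psi2 -> ~ CP C ne01L -> ~ clone_preserves C rho2 ->
  size L = 9 -> CP C L -> L \in EL.
Proof.
move=> H1 H2 H3 sL HL; have H84 := incl84 sL HL.
have := chkE_ok; rewrite /chkE => /allP /(_ L H84) /orP[/orP[/eqP eL|//]|].
  by case: H1; apply: cp_psi; rewrite -eL.
case/hasP=> X HX /bad_cp; case/(_ (run_gens_cp (gC1_cp Cid Cmu) HL HX)); tauto.
Qed.

Lemma inclX : ~ clone_preserves C psi2 -> ~ CP C ne01L -> ~ clone_preserves C rho2 ->
  (forall L, size L = 9 -> CP C L -> L \in X1L) \/ (forall L, size L = 9 -> CP C L -> L \in X2L).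
Proof.
move=> H1 H2 H3.
case: (Classical_Prop.classic (forall L, size L = 9 -> CP C L -> L \in X1L)) => A1; first by left.
right=> L2 s2 C2; apply/negPn/negP => n2.
apply: A1 => L1 s1 C1; apply/negPn/negP => n1.
have E1 := inclE H1 H2 H3 s1 C1; have E2 := inclE H1 H2 H3 s2 C2.
have := chkP_ok; rewrite /chkP => /allP /(_ L1 E1) /allP /(_ L2 E2).
rewrite (negbTE n1) (negbTE n2) /= => /hasP[X HX] /bad_cp.
have Hg : forall Y, Y \in gC1 ++ [:: L1; L2] -> CP C Y.
  move=> Y; rewrite mem_cat => /orP[|]; first exact: gC1_cp.
  by rewrite !inE => /orP[]/eqP->.
have CX : CP C X := run_CP Hg HX.
case/(_ CX); tauto.
Qed.

End Cls.

Lemma lower ms (Src : opset 'I_ms.+1) (C : opset 'I_3) k H Gt Bs TL :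
  is_clone C -> has_majority C ->
  Hok ms H -> Gok Gt -> all (checkR ms k H Gt Bs) TL ->
  (forall n f, Src n f -> 0 < n /\ forall B, B \in Bs -> P2 f B) ->
  (forall L, size L = 9 -> CP C L -> L \in TL) ->
  minor_le Src C.
Proof.
move=> Ccl Cmaj hH hG hT HS HC.
exists (fun n f => @xi ms k H Gt n f); split.
- move=> n f Sf; have [n0 HB] := HS n f Sf.
  apply: (BP Ccl Cmaj n0) => L sL CL; apply: xi_sound hH hG HB _.
  exact: (allP hT L (HC L sL CL)).
- by move=> n r s f _; exact: xi_minor.
Qed.

Lemma incl_le (A : finType) (C D : opset A) : (forall n f, C n f -> D n f) -> minor_le C D.
Proof. by move=> H; exists (fun n f => f); split. Qed.

Lemma le_trans (A B D : finType) (X : opset A) (Y : opset B) (Z : opset D) :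
  minor_le X Y -> minor_le Y Z -> minor_le X Z.
Proof.
move=> [xi [H1 H2]] [ze [K1 K2]]; exists (fun n f => ze n (xi n f)); split.
- by move=> n f Xf; apply: K1; apply: H1.
- by move=> n r s f Xf; rewrite H2 // K2 //; apply: H1.
Qed.

Lemma idem_pres1 m n (f : op 'I_m.+2 n) k : (forall x, f [ffun _ => x] = x) ->
  preserves f (rel1 (fun a : 'I_m.+2 => val a == k)).
Proof.
move=> Hid; apply/pres1 => x Hx.
have n0 := nullary_idem Hid.
have ex : x = [ffun _ => x (Ordinal n0)].
  apply/ffunP=> i; rewrite ffunE; apply: ord_inj.
  by move: (Hx i) (Hx (Ordinal n0)) => /eqP -> /eqP ->.
by rewrite ex Hid; exact: Hx.
Qed.

Lemma pos_consts m n (f : op 'I_m.+2 n) :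
  preserves f (rel1 (fun a : 'I_m.+2 => val a == 0)) ->
  preserves f (rel1 (fun a : 'I_m.+2 => val a == 1)) -> 0 < n.
Proof.
case: n f => // f /pres1 H0 /pres1 H1.
have := H0 [ffun i => ord0] (fun i => match i with Ordinal _ h => False_ind _ (notF h) end).
by rewrite (eqP (H1 _ (fun i => match i with Ordinal _ h => False_ind _ (notF h) end))).
Qed.

Lemma P2_list m n (f : op 'I_m.+1 n) (L : seq (seq bool)) :
  foldr (fun B acc => P2 f B /\ acc) True L -> forall B, B \in L -> P2 f B.
Proof. elim: L => //= a L IH [Ha HL] B; rewrite inE => /orP[/eqP->//|]; exact: IH. Qed.

Lemma srcM0 n (f : op 'I_3 n) : @Pol _ M0 n f -> 0 < n /\ forall B, B \in BsM0 -> P2 f B.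
Proof.
move=> H.
have hpsi : preserves f psi2 by apply: H; left.
have hrho : preserves f rho2 by apply: H; right; left.
have h01 : preserves f (rel1 (fun x : 'I_3 => val x != 2)) by apply: H; do 2 right; left.
have h0 : preserves f (const3 0) by apply: H; do 3 right; left.
have h1 : preserves f (const3 1) by apply: H; do 4 right; left.
have h2 : preserves f (const3 2) by apply: H; do 5 right; left.
split; first exact: pos_consts h0 h1.
apply: run_pres; apply: P2_list; rewrite /gM0 /=.
do !split; [exact: P2_eq|exact: P2_full|exact: P2_diag h0|exact: P2_diag h1|exact: P2_diag h2| | |exact: P2_diag h01].
- by apply: P2_of_pres hpsi => a b; rewrite rbE.
- by apply: P2_of_pres hrho => a b; rewrite rbE.
Qed.

Lemma srcM1 n (f : op 'I_3 n) : @Pol _ M1 n f -> 0 < n /\ forall B, B \in BsM1 -> P2 f B.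
Proof.
move=> H.
have hpsi : preserves f psi2 by apply: H; left.
have hmu : preserves f mu2 by apply: H; right; left.
have h0 : preserves f (const3 0) by apply: H; do 2 right; left.
have h1 : preserves f (const3 1) by apply: H; do 3 right; left.
have h2 : preserves f (const3 2) by apply: H; do 4 right; left.
split; first exact: pos_consts h0 h1.
apply: run_pres; apply: P2_list; rewrite /gM1 /=.
do !split; [exact: P2_eq|exact: P2_full|exact: P2_diag h0|exact: P2_diag h1|exact: P2_diag h2| |].
- by apply: P2_of_pres hpsi => a b; rewrite rbE.
- by apply: P2_of_pres hmu => a b; rewrite rbE.
Qed.

Lemma srcC2 n (f : op 'I_2 n) : @C2 n f -> 0 < n /\ forall B, B \in BsC2 -> P2 f B.
Proof.
move=> H.
have hne : preserves f (rel2 (fun x y : 'I_2 => x != y)) by apply: H; left.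
have h0 : preserves f (const2 0) by apply: H; right; left.
have h1 : preserves f (const2 1) by apply: H; do 2 right; left.
split; first exact: pos_consts h0 h1.
apply: run_pres; apply: P2_list; rewrite /gC2 /=.
do !split; [exact: P2_eq|exact: P2_full|exact: P2_diag h0|exact: P2_diag h1|].
apply: P2_of_pres hne => a b; rewrite rbE; by case: (a =P b) => [->|/eqP]; [rewrite eqxx|].
Qed.

Lemma srcI2 n (f : op 'I_2 n) : @I2 n f -> 0 < n /\ forall B, B \in BsI2 -> P2 f B.
Proof.
move=> H.
have h0 : preserves f (const2 0) by apply: H; left.
have h1 : preserves f (const2 1) by apply: H; right; left.
split; first exact: pos_consts h0 h1.
apply: run_pres; apply: P2_list; rewrite /gI2 /=.
by do !split; [exact: P2_eq|exact: P2_full|exact: P2_diag h0|exact: P2_diag h1].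
Qed.

Definition o0 : 'I_3 := ord0.
Definition o1 : 'I_3 := Ordinal (isT : 1 < 3).
Definition o2 : 'I_3 := Ordinal (isT : 2 < 3).
Definition b0 : 'I_2 := ord0.
Definition b1 : 'I_2 := Ordinal (isT : 1 < 2).

Lemma mu2_not2 n (f : op 'I_3 n) : (forall x, f [ffun _ => x] = x) -> preserves f mu2 ->
  forall x : {ffun 'I_n -> 'I_3}, (forall i, val (x i) != 2) -> val (f x) != 2.
Proof.
move=> Hid /pres_P2 H x Hx.
have := H x [ffun _ => o0]; rewrite Hid /= => /(_ _); rewrite eqbF_neg; apply=> i.
by rewrite ffunE /= eqbF_neg Hx.
Qed.

Lemma C_M0 (C : opset 'I_3) : idempotent_clone C -> clone_preserves C mu2 ->
  clone_preserves C psi2 -> clone_preserves C rho2 -> forall n f, C n f -> @Pol _ M0 n f.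
Proof.
move=> Cid Cmu Cpsi Crho n f Cf R; rewrite /M0 /=.
case=> [<-|[<-|[<-|[<-|[<-|[<-|[]]]]]]].
- exact: Cpsi.
- exact: Crho.
- by apply/pres1; apply: mu2_not2 (Cid n f Cf) (Cmu n f Cf).
- exact: idem_pres1 (Cid n f Cf).
- exact: idem_pres1 (Cid n f Cf).
- exact: idem_pres1 (Cid n f Cf).
Qed.

Lemma C_M1 (C : opset 'I_3) : idempotent_clone C -> clone_preserves C mu2 ->
  clone_preserves C psi2 -> forall n f, C n f -> @Pol _ M1 n f.
Proof.
move=> Cid Cmu Cpsi n f Cf R; rewrite /M1 /=.
case=> [<-|[<-|[<-|[<-|[<-|[]]]]]].
- exact: Cpsi.
- exact: Cmu.
- exact: idem_pres1 (Cid n f Cf).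
- exact: idem_pres1 (Cid n f Cf).
- exact: idem_pres1 (Cid n f Cf).
Qed.

Definition b2o (b : bool) : 'I_2 := if b then b1 else b0.
Definition lift2 (c : 'I_2) : 'I_3 := if val c == 1 then o2 else o0.
Definition qmap n (f : op 'I_3 n) : op 'I_2 n :=
  [ffun c : {ffun 'I_n -> 'I_2} => b2o (val (f [ffun i => lift2 (c i)]) == 2)].

Lemma qmap_minor n r (s : 'I_n -> 'I_r) (f : op 'I_3 n) : qmap (minor s f) = minor s (qmap f).
Proof.
apply/ffunP=> c; rewrite /qmap /minor !ffunE; congr (b2o (val (f _) == 2)).
by apply/ffunP=> i; rewrite !ffunE.
Qed.

Lemma q_consts n (f : op 'I_3 n) : (forall x, f [ffun _ => x] = x) ->
  forall k, preserves (qmap f) (rel1 (fun x : 'I_2 => val x == k)).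
Proof.
move=> Hid k; apply/pres1 => x Hx; rewrite /qmap ffunE.
case: k Hx => [|[|k]] Hx.
- have -> : [ffun i => lift2 (x i)] = [ffun _ => o0].
    by apply/ffunP=> i; rewrite !ffunE /lift2; move: (Hx i) => /eqP->.
  by rewrite Hid.
- have -> : [ffun i => lift2 (x i)] = [ffun _ => o2].
    by apply/ffunP=> i; rewrite !ffunE /lift2; move: (Hx i) => /eqP->.
  by rewrite Hid.
- have n0 : 0 < n.
    case: n f x Hx Hid => // f x Hx Hid.
    have e : [ffun _ : 'I_0 => o0] = [ffun _ => o1] by apply/ffunP=> [[]].
    by have := Hid o0; rewrite e Hid.
  by have := Hx (Ordinal n0); case: (x _) => [[|[|]]].
Qed.

Lemma q_I2 (C : opset 'I_3) : idempotent_clone C -> minor_le C I2.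
Proof.
move=> Cid; exists qmap; split; last by move=> *; exact: qmap_minor.
move=> n f Cf R; rewrite /= => [[<-|[<-|[]]]]; exact: q_consts (Cid n f Cf) _.
Qed.

Lemma q_C2 (C : opset 'I_3) : idempotent_clone C -> clone_preserves C rho2 -> minor_le C C2.
Proof.
move=> Cid Crho; exists qmap; split; last by move=> *; exact: qmap_minor.
move=> n f Cf R; rewrite /= => [[<-|[<-|[<-|[]]]]]; try exact: q_consts (Cid n f Cf) _.
apply/pres_P2 => x y Hxy; rewrite /qmap !ffunE.
have := (pres_P2 _ _).1 (Crho n f Cf) [ffun i => lift2 (x i)] [ffun i => lift2 (y i)].
case/(_ _)/Wrap.
  move=> i; rewrite !ffunE /lift2; move: (Hxy i).
  by case: (x i) => [[|[|]] ?]; case: (y i) => [[|[|]] ?].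
by case: (_ == 2); case: (_ == 2).
Qed.

Definition emb (c : 'I_2) : 'I_3 := widen_ord (isT : 2 <= 3) c.
Definition low (a : 'I_3) : 'I_2 := b2o (val a == 1).
Definition rmap n (f : op 'I_3 n) : op 'I_2 n := [ffun v : {ffun 'I_n -> 'I_2} => low (f [ffun i => emb (v i)])].

Lemma rmap_minor n r (s : 'I_n -> 'I_r) (f : op 'I_3 n) : rmap (minor s f) = minor s (rmap f).
Proof.
apply/ffunP=> c; rewrite /rmap /minor !ffunE; congr (low (f _)).
by apply/ffunP=> i; rewrite !ffunE.
Qed.

Lemma r_C2 (C : opset 'I_3) :
  (forall n f, C n f -> (forall x, f [ffun _ => x] = x) /\ preserves f mu2 /\
     forall x y : {ffun 'I_n -> 'I_3},
       (forall i, [&& val (x i) != 2, val (y i) != 2 & x i != y i]) -> f x != f y) ->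
  minor_le C C2.
Proof.
move=> H; exists rmap; split; last by move=> *; exact: rmap_minor.
move=> n f Cf; have [Hid [Hmu Hne]] := H n f Cf.
move=> R; rewrite /= => [[<-|[<-|[<-|[]]]]].
- apply/pres_P2 => v w Hvw; rewrite /rmap !ffunE.
  set X := [ffun i => emb (v i)]; set Y := [ffun i => emb (w i)].
  have nX : val (f X) != 2 by apply: mu2_not2 => // i; rewrite ffunE; case: (v i) => [[|[|]] ?].
  have nY : val (f Y) != 2 by apply: mu2_not2 => // i; rewrite ffunE; case: (w i) => [[|[|]] ?].
  have := Hne X Y; case/(_ _)/Wrap.
    move=> i; rewrite !ffunE; move: (Hvw i).
    by case: (v i) => [[|[|]] ?]; case: (w i) => [[|[|]] ?].
  move: nX nY; rewrite /low.
  by case: (f X) => [[|[|[|]]] ?]; case: (f Y) => [[|[|[|]]] ?].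
- apply/pres1 => v Hv; rewrite /rmap ffunE.
  have -> : [ffun i => emb (v i)] = [ffun _ => o0].
    by apply/ffunP=> i; rewrite !ffunE; apply: ord_inj => /=; move: (Hv i) => /= /eqP ->.
  by rewrite Hid.
- apply/pres1 => v Hv; rewrite /rmap ffunE.
  have -> : [ffun i => emb (v i)] = [ffun _ => o1].
    by apply/ffunP=> i; rewrite !ffunE; apply: ord_inj => /=; move: (Hv i) => /= /eqP ->.
  by rewrite Hid.
Qed.

Lemma idem_of_consts n (f : op 'I_3 n) :
  (forall k, preserves f (const3 k)) -> forall x, f [ffun _ => x] = x.
Proof.
move=> H x; apply: ord_inj; have := H x; rewrite /const3 => /pres1.
by move=> /(_ [ffun _ => x]) /(_ _) /eqP; apply=> i; rewrite ffunE.
Qed.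

Lemma r_C2_C (C : opset 'I_3) : idempotent_clone C -> clone_preserves C mu2 ->
  CP C ne01L -> minor_le C C2.
Proof.
move=> Cid Cmu Cne; apply: r_C2 => n f Cf; split; first exact: Cid.
split; first exact: Cmu.
move=> x y Hxy; have := Cne n f Cf x y; case/(_ _)/Wrap.
  move=> i; rewrite rbE; move: (Hxy i).
  by case: (x i) => [[|[|[|]]] ?]; case: (y i) => [[|[|[|]]] ?].
rewrite rbE; by case: (f x) => [[|[|[|]]] ?]; case: (f y) => [[|[|[|]]] ?].
Qed.

Lemma M1_facts n (f : op 'I_3 n) : @Pol _ M1 n f ->
  [/\ preserves f psi2, preserves f mu2 & forall k, preserves f (const3 k)].
Proof.
move=> H; split; first by apply: H; left.
  by apply: H; right; left.
move=> k; case: (ltnP k 3) => hk.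
  case: k hk => [|[|[|]]] // _.
  - by apply: H; do 2 right; left.
  - by apply: H; do 3 right; left.
  - by apply: H; do 4 right; left.
have n0 : 0 < n by apply: pos_consts; apply: H; [do 2 right; left|do 3 right; left].
rewrite /const3; apply/pres1 => x Hx; move: (Hx (Ordinal n0)) => /eqP e.
by move: (ltn_ord (x (Ordinal n0))); rewrite e ltnNge hk.
Qed.

Lemma M1_C2 : minor_le (Pol M1) C2.
Proof.
apply: r_C2 => n f /M1_facts [Hpsi Hmu Hk].
have Hid := idem_of_consts Hk.
split=> //; split=> // x y Hxy.
have nx : val (f x) != 2 by apply: mu2_not2 => // i; case/and3P: (Hxy i).
have := (pres_P2 _ _).1 Hpsi x y; case/(_ _)/Wrap.
  move=> i; move: (Hxy i).
  by case: (x i) => [[|[|[|]]] ?]; case: (y i) => [[|[|[|]]] ?].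
move: nx; by case: (f x) => [[|[|[|]]] ?]; case: (f y) => [[|[|[|]]] ?].
Qed.

Lemma M0_M1 : minor_le (Pol M0) (Pol M1).
Proof.
apply: incl_le => n f H R; rewrite /M1 /=.
have hrho : preserves f rho2 by apply: H; right; left.
case=> [<-|[<-|[<-|[<-|[<-|[]]]]]].
- by apply: H; left.
- have P := P2_bcomp (P2_of_pres (L := rho2L) (fun a b => rbE _ _ _) hrho) (P2_of_pres (L := rho2L) (fun a b => rbE _ _ _) hrho).
  have E : bcomp 3 rho2L rho2L = mu2L by vm_compute.
  rewrite E in P; by apply: pres_of_P2 P => a b; rewrite rbE.
- by apply: H; do 3 right; left.
- by apply: H; do 4 right; left.
- by apply: H; do 5 right; left.
Qed.

Lemma C2_I2 : minor_le C2 I2.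
Proof.
apply: incl_le => n f H R; rewrite /= => [[<-|[<-|[]]]].
- by apply: H; right; left.
- by apply: H; do 2 right; left.
Qed.

Definition and2 : op 'I_2 2 := [ffun x : {ffun 'I_2 -> 'I_2} => b2o ((val (x b0) == 1) && (val (x b1) == 1))].

Lemma rev_b0 : @rev_ord 2 b0 = b1. Proof. exact: ord_inj. Qed.
Lemma rev_b1 : @rev_ord 2 b1 = b0. Proof. exact: ord_inj. Qed.

Lemma sepI2C2 : ~ minor_le I2 C2.
Proof.
case=> xi [H1 H2].
have Ia : @I2 2 and2.
  move=> R; rewrite /= => [[<-|[<-|[]]]]; apply/pres1 => x Hx; rewrite /and2 ffunE.
  - by move: (Hx b0) => /eqP ->.
  - by move: (Hx b0) (Hx b1) => /eqP -> /eqP ->.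
have ma : minor (@rev_ord 2) and2 = and2.
  by apply/ffunP=> x; rewrite /minor /and2 !ffunE rev_b0 rev_b1 andbC.
have e := H2 2 2 (@rev_ord 2) and2 Ia; rewrite ma in e.
have Ct := H1 2 and2 Ia.
have hne : preserves (xi 2 and2) (rel2 (fun x y : 'I_2 => x != y)) by apply: Ct; left.
have := (pres_P2 _ _).1 hne [ffun i => i] [ffun i => rev_ord i]; case/(_ _)/Wrap.
  by move=> i; rewrite !ffunE; case: i => [[|[|]] ?].
rewrite {1}e /minor ffunE.
have -> : [ffun i => [ffun i0 : 'I_2 => i0] (rev_ord i)] = [ffun i => rev_ord i].
  by apply/ffunP=> i; rewrite !ffunE.
by rewrite eqxx.
Qed.

Definition majb (a b c : bool) := [|| a && b, a && c | b && c].
Definition maj2 : op 'I_2 3 :=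
  [ffun x : {ffun 'I_3 -> 'I_2} => b2o (majb (val (x o0) == 1) (val (x o1) == 1) (val (x o2) == 1))].
Definition sw3 (i : 'I_3) : 'I_3 := if val i == 0 then o1 else if val i == 1 then o0 else o2.
Definition s3 (i : 'I_3) : 'I_2 := if val i == 2 then b1 else b0.
Definition s1 (i : 'I_1) : 'I_2 := b0.

Lemma b2o_val (c : 'I_2) : b2o (val c == 1) = c.
Proof. by apply: ord_inj; case: c => [[|[|]] ?]. Qed.

Lemma sepC2M1 : ~ minor_le C2 (Pol M1).
Proof.
case=> xi [H1 H2].
have Cm : @C2 3 maj2.
  move=> R; rewrite /= => [[<-|[<-|[<-|[]]]]].
  - apply/pres_P2 => x y Hxy; rewrite /maj2 !ffunE.
    have E : forall i, (val (y i) == 1) = ~~ (val (x i) == 1).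
      by move=> i; move: (Hxy i); case: (x i) => [[|[|]] ?]; case: (y i) => [[|[|]] ?].
    rewrite !E; by case: (val (x o0) == 1); case: (val (x o1) == 1); case: (val (x o2) == 1).
  - apply/pres1 => x Hx; rewrite /maj2 ffunE.
    by move: (Hx o0) (Hx o1) (Hx o2) => /eqP -> /eqP -> /eqP ->.
  - apply/pres1 => x Hx; rewrite /maj2 ffunE.
    by move: (Hx o0) (Hx o1) (Hx o2) => /eqP -> /eqP -> /eqP ->.
have id1 : @C2 1 (proj 'I_2 ord0).
  move=> R; rewrite /= => [[<-|[<-|[<-|[]]]]].
  - by apply/pres_P2 => x y Hxy; rewrite /proj !ffunE; apply: Hxy.
  - by apply/pres1 => x Hx; rewrite /proj ffunE; apply: Hx.
  - by apply/pres1 => x Hx; rewrite /proj ffunE; apply: Hx.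
have xid : xi 1 (proj 'I_2 ord0) = proj 'I_3 ord0.
  have [_ _ Hk] := M1_facts (H1 _ _ id1).
  apply/ffunP=> x; rewrite /proj ffunE; apply: ord_inj.
  have := Hk (x ord0); rewrite /const3 => /pres1 /(_ x) /(_ _) /eqP; apply.
  by move=> i; rewrite (ord1 i).
have msw : minor sw3 maj2 = maj2.
  apply/ffunP=> x; rewrite /minor /maj2 !ffunE /sw3 /=.
  by case: (val (x o0) == 1); case: (val (x o1) == 1); case: (val (x o2) == 1).
have ms3 : minor s3 maj2 = minor s1 (proj 'I_2 ord0).
  apply/ffunP=> x; rewrite /minor /maj2 /proj !ffunE /s3 /s1 /=.
  by rewrite -[RHS]b2o_val; case: (val (x b0) == 1); case: (val (x b1) == 1).
set g := xi 3 maj2.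
have Cg := H1 _ _ Cm.
have [Hpsi Hmu _] := M1_facts Cg.
have e1 : g = minor sw3 g by rewrite /g -H2 // msw.
have e2 : minor s3 g = minor s1 (proj 'I_3 ord0).
  by rewrite /g -H2 // ms3 H2 // xid.
pose v012 := tup3 o0 o1 o2.
pose v102 := tup3 o1 o0 o2.
pose v002 := tup3 o0 o0 o2.
have g1 : g v012 = g v102.
  rewrite {1}e1 /minor ffunE; congr (g _); apply/ffunP=> i.
  by rewrite !ffunE /sw3; case: i => [[|[|[|]]] ?].
have g2 : g v002 = o0.
  have := congr1 (fun h : op 'I_3 2 => h [ffun i : 'I_2 => if val i == 0 then o0 else o2]) e2.
  rewrite /minor /proj !ffunE /= => <-; congr (g _); apply/ffunP=> i.
  by rewrite !ffunE /s3; case: i => [[|[|[|]]] ?].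
have := (pres_P2 _ _).1 Hpsi v012 v102; case/(_ _)/Wrap.
  by move=> i; rewrite !ffunE; case: i => [[|[|[|]]] ?].
rewrite -g1 => Hv.
have := (pres_P2 _ _).1 Hmu v012 v002; case/(_ _)/Wrap.
  by move=> i; rewrite !ffunE; case: i => [[|[|[|]]] ?].
rewrite g2; move: Hv; by case: (g v012) => [[|[|[|]]] ?].
Qed.

Definition q0 : 'I_4 := ord0.
Definition q1 : 'I_4 := Ordinal (isT : 1 < 4).
Definition q2 : 'I_4 := Ordinal (isT : 2 < 4).
Definition q3 : 'I_4 := Ordinal (isT : 3 < 4).
Definition maj3 (a b c : 'I_3) : 'I_3 := if a == b then a else c.
Definition h4 : op 'I_3 4 := [ffun x : {ffun 'I_4 -> 'I_3} =>
  if [&& val (x q0) != 2, val (x q1) != 2, val (x q2) != 2 & val (x q3) != 2]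
  then maj3 (x q0) (x q1) (x q2) else o2].
Definition sw (a : 'I_3) : 'I_3 := if val a == 0 then o1 else if val a == 1 then o0 else a.

Lemma psi_sw (a b : 'I_3) :
  [|| (val a == 0) && (val b == 1), (val a == 1) && (val b == 0) | (val a == 2) && (val b == 2)]
  = (b == sw a).
Proof. by case: a => [[|[|[|]]] ?]; case: b => [[|[|[|]]] ?]. Qed.

Lemma sw_ne2 a : (val (sw a) != 2) = (val a != 2).
Proof. by case: a => [[|[|[|]]] ?]. Qed.
Lemma sw_eq a b : (sw a == sw b) = (a == b).
Proof. by case: a => [[|[|[|]]] ?]; case: b => [[|[|[|]]] ?]. Qed.

Lemma h4_M1 : @Pol _ M1 4 h4.
Proof.
move=> R; rewrite /M1 /= => [[<-|[<-|[<-|[<-|[<-|[]]]]]]].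
- apply/pres_P2 => x y Hxy.
  have ey : y = [ffun i => sw (x i)].
    by apply/ffunP=> i; rewrite ffunE; apply/eqP; rewrite -psi_sw; apply: Hxy.
  rewrite psi_sw ey /h4 !ffunE !sw_ne2.
  case: ifP => _ //; rewrite /maj3 sw_eq; by case: ifP.
- apply/pres_P2 => x y Hxy; rewrite /h4 !ffunE.
  have E : forall i, (val (y i) != 2) = (val (x i) != 2).
    by move=> i; move: (Hxy i); case: (val (x i) == 2); case: (val (y i) == 2).
  rewrite !E; case: ifP => //= /and4P[h0 h1 h2 h3].
  rewrite /maj3; case: ifP => _; case: ifP => _; rewrite ?(negbTE h0) ?(negbTE h2) //.
  + by rewrite -E in h0; rewrite (negbTE h0).
  + by rewrite -E in h2; rewrite (negbTE h2).
  + by rewrite -E in h0; rewrite (negbTE h0).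
  + by rewrite -E in h2; rewrite (negbTE h2).
- apply/pres1 => x Hx; rewrite /h4 ffunE.
  have ex : forall i, x i = x q0 by move=> i; apply: ord_inj; rewrite (eqP (Hx i)) (eqP (Hx q0)).
  by rewrite !(ex q1) !(ex q2) !(ex q3) (eqP (Hx q0)) /= /maj3 eqxx; exact: Hx.
- apply/pres1 => x Hx; rewrite /h4 ffunE.
  have ex : forall i, x i = x q0 by move=> i; apply: ord_inj; rewrite (eqP (Hx i)) (eqP (Hx q0)).
  by rewrite !(ex q1) !(ex q2) !(ex q3) (eqP (Hx q0)) /= /maj3 eqxx; exact: Hx.
- apply/pres1 => x Hx; rewrite /h4 ffunE.
  by move: (Hx q0) => /eqP->.
Qed.

Definition sg1 (i : 'I_4) : 'I_3 := if val i == 0 then o0 else if val i == 1 then o1 else o2.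
Definition tg1 (i : 'I_4) : 'I_3 := if val i == 0 then o1 else if val i == 1 then o0 else o2.
Definition sg2 (i : 'I_4) : 'I_3 := if val i == 2 then o0 else if val i == 3 then o1 else o2.
Definition tg2 (i : 'I_4) : 'I_3 := if val i == 2 then o1 else if val i == 3 then o0 else o2.

Lemma maj3C a b c : maj3 a b c = maj3 b a c.
Proof. by rewrite /maj3; case: eqP => [->|]; [rewrite eqxx|case: eqP => // ->]. Qed.

Lemma mh1 : minor sg1 h4 = minor tg1 h4.
Proof.
apply/ffunP=> x; rewrite /minor /h4 !ffunE /sg1 /tg1 /=.
by rewrite andbCA maj3C.
Qed.

Lemma and4C (a b c : bool) : [&& a, a, b & c] = [&& a, a, c & b].
Proof. by case: a; case: b; case: c. Qed.

Lemma mh2 : minor sg2 h4 = minor tg2 h4.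
Proof.
apply/ffunP=> x; rewrite /minor /h4 !ffunE /sg2 /tg2 /=.
by rewrite and4C /maj3 !eqxx.
Qed.

Lemma psi_self (v : 'I_3) :
  [|| (val v == 0) && (val v == 1), (val v == 1) && (val v == 0) | (val v == 2) && (val v == 2)] ->
  val v == 2.
Proof. by case: v => [[|[|[|]]] ?]. Qed.

Lemma sepM1M0 : ~ minor_le (Pol M1) (Pol M0).
Proof.
case=> xi [H1 H2].
set t := xi 4 h4.
have Ct := H1 _ _ h4_M1.
have hpsi : preserves t psi2 by apply: Ct; left.
have hrho : preserves t rho2 by apply: Ct; right; left.
have e1 : minor sg1 t = minor tg1 t by rewrite /t -!H2 ?mh1 //; exact: h4_M1.
have e2 : minor sg2 t = minor tg2 t by rewrite /t -!H2 ?mh2 //; exact: h4_M1.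
pose v := tup3 o0 o1 o2.
have a1 : val (t [ffun i => v (sg1 i)]) == 2.
  have := congr1 (fun h : op 'I_3 3 => h v) e1; rewrite /minor !ffunE => E.
  have := (pres_P2 _ _).1 hpsi [ffun i => v (sg1 i)] [ffun i => v (tg1 i)]; case/(_ _)/Wrap.
    by move=> i; rewrite !ffunE /sg1 /tg1; case: i => [[|[|[|[|]]]] ?].
  rewrite -E; exact: psi_self.
have a2 : val (t [ffun i => v (sg2 i)]) == 2.
  have := congr1 (fun h : op 'I_3 3 => h v) e2; rewrite /minor !ffunE => E.
  have := (pres_P2 _ _).1 hpsi [ffun i => v (sg2 i)] [ffun i => v (tg2 i)]; case/(_ _)/Wrap.
    by move=> i; rewrite !ffunE /sg2 /tg2; case: i => [[|[|[|[|]]]] ?].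
  rewrite -E; exact: psi_self.
have := (pres_P2 _ _).1 hrho [ffun i => v (sg1 i)] [ffun i => v (sg2 i)]; case/(_ _)/Wrap.
  by move=> i; rewrite !ffunE /sg1 /sg2; case: i => [[|[|[|[|]]]] ?].
by rewrite a1 a2.
Qed.

Theorem theorem6p9 :
  (forall C : opset 'I_3,
      is_clone C -> idempotent_clone C -> malcev C -> has_majority C ->
      clone_preserves C mu2 ->
      (~ clone_preserves C psi2 -> minor_eq C C2 \/ minor_eq C I2) /\
      (clone_preserves C psi2 -> ~ clone_preserves C rho2 -> minor_eq C (Pol M1)) /\
      (clone_preserves C psi2 -> clone_preserves C rho2 -> minor_eq C (Pol M0))) /\
  (minor_le (Pol M0) (Pol M1) /\ minor_le (Pol M1) C2 /\ minor_le C2 I2) /\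
  (~ minor_eq (Pol M0) (Pol M1) /\ ~ minor_eq (Pol M0) C2 /\ ~ minor_eq (Pol M0) I2 /\
   ~ minor_eq (Pol M1) C2 /\ ~ minor_eq (Pol M1) I2 /\ ~ minor_eq C2 I2).
Proof.
split; [|split].
- move=> C Ccl Cid Cmal Cmaj Cmu.
  split; [|split].
  + move=> Hpsi.
    have lowC2 : minor_le C2 C.
      apply: (@lower 1 C2 C 3 Hc Gc BsC2 S83L Ccl Cmaj chkC_H chkC_G chkC_T srcC2).
      by move=> L sL CL; exact: (incl83 Cid Cmal Cmu Hpsi sL CL).
    case: (classic (CP C ne01L \/ clone_preserves C rho2)) => [[Hne|Hrho]|Hn].
    * by left; split; [exact: r_C2_C Cid Cmu Hne | exact: lowC2].
    * by left; split; [exact: q_C2 Cid Hrho | exact: lowC2].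
    * right; split; first exact: q_I2 Cid.
      have Hne : ~ CP C ne01L by tauto.
      have Hrho : ~ clone_preserves C rho2 by tauto.
      case: (inclX Cid Cmal Cmu Hpsi Hne Hrho) => HX.
      -- exact: (@lower 1 I2 C 2 Hd1 Gd1 BsI2 X1L Ccl Cmaj chkD1_H chkD1_G chkD1_T srcI2 HX).
      -- exact: (@lower 1 I2 C 2 Hd2 Gd2 BsI2 X2L Ccl Cmaj chkD2_H chkD2_G chkD2_T srcI2 HX).
  + move=> Hpsi Hrho; split; first exact: incl_le (C_M1 Cid Cmu Hpsi).
    apply: (@lower 2 (Pol M1) C 2 Hb Gb BsM1 S63L Ccl Cmaj chkB_H chkB_G chkB_T srcM1).
    by move=> L sL CL; exact: (incl63 Cid Cmal Cmu Hpsi Hrho sL CL).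
  + move=> Hpsi Hrho; split; first exact: incl_le (C_M0 Cid Cmu Hpsi Hrho).
    apply: (@lower 2 (Pol M0) C 4 Ha Ga BsM0 S84L Ccl Cmaj chkA_H chkA_G chkA_T srcM0).
    by move=> L sL CL; exact: (incl84 Cid Cmal Cmu sL CL).
- split; [exact: M0_M1 | split; [exact: M1_C2 | exact: C2_I2]].
- split; first by case=> _ H; exact: sepM1M0 H.
  split; first by case=> _ H; exact: sepC2M1 (le_trans H M0_M1).
  split; first by case=> _ H; exact: sepI2C2 (le_trans (le_trans H M0_M1) M1_C2).
  split; first by case=> _ H; exact: sepC2M1 H.
  split; first by case=> _ H; exact: sepI2C2 (le_trans H M1_C2).
  by case=> _ H; exact: sepI2C2 H.
Qed.
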